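(* Let $B$ be a vector space over a field $\mathbb{K}$ of characteristic zero with basis $b_1,\dots,b_n$, $n\geq3$, let $w\colon B\times B\to B^*$ be bilinear with $c_{ijk}:=w(b_i,b_j)(b_k)$, and let $b_1^*,\dots,b_n^*$ be the dual basis. On $\mathfrak{L}=B\oplus B^*$ define $[b+\beta,b'+\beta']=w(b,b')$ and $\phi(b+\beta,b'+\beta')=\beta(b')+\beta'(b)$. The following are equivalent: (a) $(\mathfrak{L},\phi)$ is a $2$-step nilpotent quadratic Lie algebra. (b) $w$ is a nonzero cyclic $2$-cocycle (for the abelian Lie algebra $B$) and $(\mathfrak{L},\phi)=(T^*_wB,q_B)$. (c) Setting $A_k=\mathrm{span}\langle b_i,b_i^*:i=1,\dots,k\rangle$ and, for $1\le i\le n$, $d_{i-1}\colon A_{i-1}\to A_{i-1}$ linear with $d_{i-1}(b_j^* )=0$ and $d_{i-1}(b_j)=\sum_{k=1}^{i-1}c_{ijk}b_k^*$ for $j<i$, the sequence $\{(A_k,f_k)\}_{k=0}^n$ starting at $A_0=\{0\}$, $f_0=0$, given by $\{(b_{k+1},d_k)\}_{k=0}^{n-1}$, is a chain of one-dimensional double extensions satisfying (NNP) and (2SP), and $(A_n,f_n)=(\mathfrak{L},\phi)$. (d) The family $\{M_1,\dots,M_n\}$ of $n\times n$ matrices where the $(k,j)$ entry of $M_i$ is $c_{ijk}$ is a non-null $n$-quadratic family, and the quadratic algebra it defines equals $(\mathfrak{L},\phi)$ (under $v_i=b_i$, $z_i=b_i^*$).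
   Context: A quadratic Lie algebra is a Lie algebra with a non-degenerate symmetric bilinear form $\phi$ with $\phi([x,y],z)+\phi(y,[x,z])=0$; $2$-step nilpotent means $[L,[L,L]]=0\neq[L,L]$. For $B$ abelian, a $2$-cocycle $w\colon B\times B\to B^*$ (coadjoint coefficients) is a skew-symmetric bilinear map; $w$ is cyclic if $w(a,b)(c)=w(c,a)(b)=w(b,c)(a)$. The $T^*$-extension $(T^*_wB,q_B)$ of abelian $B$ is $B\oplus B^*$ with bracket $[b+\beta,b'+\beta']=w(b,b')$ and $q_B(b+\beta,b'+\beta')=\beta(b')+\beta'(b)$. One-dimensional double extension of a quadratic Lie algebra $(A,f)$ by $(b,d)$, $d$ an $f$-skew-symmetric derivation ($f(d(x),y)+f(x,d(y))=0$): the space $\mathbb{K}b\oplus A\oplus\mathbb{K}b^*$ with bracket $[\lambda b+a+\mu b^*,\lambda'b+a'+\mu'b^*]=\lambda d(a')-\lambda'd(a)+[a,a']_A+f(d(a),a')b^*$ and form $(\lambda b+a+\mu b^*,\lambda'b+a'+\mu'b^* )\mapsto\lambda\mu'+\lambda'\mu+f(a,a')$. A chain of one-dimensional double extensions $\{(A_k,f_k)\}_{k=0}^n$ by $\{(b_{k+1},d_k)\}$: $A_0=0$, $f_0=0$, each $d_k$ an $f_k$-skew-symmetric derivation of $A_k$, and $(A_{k+1},f_{k+1})$ the one-dimensional double extension of $(A_k,f_k)$ by $(b_{k+1},d_k)$. With $A_{k,2}=\mathrm{span}\langle b_1^*,\dots,b_k^*\rangle$: (NNP) means $d_k\ne0$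 for some $k$; (2SP) means $\mathrm{im}\,d_k\subseteq A_{k,2}\subseteq\ker d_k$ for all $k\ge1$. A family $\{M_1,\dots,M_n\}$ of $n\times n$ matrices is $n$-quadratic if each $M_i$ is skew-symmetric, the $i$-th column of $M_i$ is zero, and for $j>i$ the $j$-th column of $M_i$ is the negative of the $i$-th column of $M_j$; non-null means not all matrices are zero. The quadratic algebra defined by such a family (with $m_{ijk}$ the $(k,j)$ entry of $M_i$) has basis $v_1,\dots,v_n,z_1,\dots,z_n$, bracket $[v_i,v_j]=\sum_k m_{ijk}z_k$, $[z_i,\cdot]=0$, and form $\varphi(v_i,v_j)=\varphi(z_i,z_j)=0$, $\varphi(v_i,z_j)=\delta_{ij}$. *)

(* Defs.v *)
From HB Require Import structures.
From mathcomp Require Import all_boot all_order all_algebra.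
Set Implicit Arguments. Unset Strict Implicit. Unset Printing Implicit Defensive.
Import Order.TTheory GRing.Theory Num.Theory.
Local Open Scope ring_scope.

Section Generic.
Variables (K : fieldType) (V : lmodType K).

Definition bilinear_form (f : V -> V -> K) : Prop :=
  (forall (a : K) x y z, f (a *: x + y) z = a * f x z + f y z) /\
  (forall (a : K) x y z, f x (a *: y + z) = a * f x y + f x z).

Definition bilinear_op (br : V -> V -> V) : Prop :=
  (forall (a : K) x y z, br (a *: x + y) z = a *: br x z + br y z) /\
  (forall (a : K) x y z, br x (a *: y + z) = a *: br x y + br x z).

Definition is_lie_algebra (br : V -> V -> V) : Prop :=
  bilinear_op br /\ (forall x, br x x = 0) /\
  (forall x y z, br x (br y z) + br y (br z x) + br z (br x y) = 0).

Definition is_quadratic_lie (br : V -> V -> V) (phi : V -> V -> K) : Prop :=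
  is_lie_algebra br /\ bilinear_form phi /\ (forall x y, phi x y = phi y x) /\
  (forall x, (forall y, phi x y = 0) -> x = 0) /\
  (forall x y z, phi (br x y) z + phi y (br x z) = 0).

Definition two_step_nilpotent (br : V -> V -> V) : Prop :=
  (forall x y z, br x (br y z) = 0) /\ (exists x y, br x y != 0).
End Generic.

(* ---------- Concrete setting: B = K^n (basis e_0..e_{n-1}), B^* = K^n in the dual basis ---------- *)
Section Concrete.
Variables (K : fieldType) (n : nat).

Definition Bsp := 'rV[K]_n.
(* L = B (+) B^*, an element is (b, beta) *)
Definition Lsp := ('rV[K]_n * 'rV[K]_n)%type.

(* basis vector b_i (and, read in B^*, the dual basis vector b_i^* ); 0 if i >= n *)
Definition bvec (i : nat) : 'rV[K]_n := \row_(j < n) (j == i :> nat)%:R.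

(* evaluation beta(b) of beta in B^* (dual-basis coordinates) at b in B *)
Definition dpair (beta b : 'rV[K]_n) : K := \sum_(i < n) beta 0 i * b 0 i.

Definition coord (x : 'rV[K]_n) (i : nat) : K := dpair x (bvec i).

Variable w : 'rV[K]_n -> 'rV[K]_n -> 'rV[K]_n.

(* structure constants c_ijk = w(b_i,b_j)(b_k) (0-indexed) *)
Definition cc (i j k : nat) : K := dpair (w (bvec i) (bvec j)) (bvec k).

Definition Lbr (u v : Lsp) : Lsp := (0, w u.1 v.1).
Definition Lform (u v : Lsp) : K := dpair u.2 v.1 + dpair v.2 u.1.

Definition cocycle_abelian : Prop :=
  bilinear_op w /\ (forall a b, w a b = - w b a).
Definition cyclic_w : Prop :=
  forall a b c, dpair (w a b) c = dpair (w c a) b /\ dpair (w c a) b = dpair (w b c) a.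
Definition tstar_br (u v : Lsp) : Lsp := (0, w u.1 v.1).
Definition tstar_form (u v : Lsp) : K := dpair u.2 v.1 + dpair v.2 u.1.

(* A_k = span<b_i, b_i^* : i < k>   (0-indexed) *)
Definition proj (k : nat) (u : Lsp) : Lsp :=
  (\row_(i < n) (if (i < k)%N then u.1 0 i else 0),
   \row_(i < n) (if (i < k)%N then u.2 0 i else 0)).
Definition inA (k : nat) (u : Lsp) : Prop := proj k u = u.
Definition inA2 (k : nat) (u : Lsp) : Prop := u.1 = 0 /\ inA k u.

Definition dmap (k : nat) (u : Lsp) : Lsp :=
  (0, \sum_(m < n | (m < k)%N)
        (\sum_(j < n | (j < k)%N) cc k j m * u.1 0 j) *: bvec m).

Definition bL (k : nat) : Lsp := (bvec k, 0).
Definition bsL (k : nat) : Lsp := (0, bvec k).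

(* form f_k of A_k, obtained by iterated double extension from f_0 = 0;
   u = lam b_k + a + mu b_k^* with a in A_k *)
Fixpoint dform (k : nat) (u v : Lsp) : K :=
  match k with
  | 0 => 0
  | k'.+1 =>
      coord u.1 k' * coord v.2 k' + coord v.1 k' * coord u.2 k'
      + dform k' (proj k' u) (proj k' v)
  end.

(* bracket of A_k, obtained by iterated double extension from A_0 = 0 *)
Fixpoint dbr (k : nat) (u v : Lsp) : Lsp :=
  match k with
  | 0 => 0
  | k'.+1 =>
      let a := proj k' u in let a' := proj k' v in
      coord u.1 k' *: dmap k' a' - coord v.1 k' *: dmap k' a + dbr k' a a'
      + dform k' (dmap k' a) a' *: bsL k'
  end.

Definition is_chain : Prop :=
  forall k, (k < n)%N ->
    (forall (al : K) a b, inA k a -> inA k b ->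
        dmap k (al *: a + b) = al *: dmap k a + dmap k b) /\
    (forall a, inA k a -> inA k (dmap k a)) /\
    (forall a b, inA k a -> inA k b ->
        dmap k (dbr k a b) = dbr k (dmap k a) b + dbr k a (dmap k b)) /\
    (forall a b, inA k a -> inA k b ->
        dform k (dmap k a) b + dform k a (dmap k b) = 0).

Definition NNP : Prop := exists k, (k < n)%N /\ exists a, inA k a /\ dmap k a != 0.

Definition TwoSP : Prop :=
  forall k, (1 <= k < n)%N ->
    (forall a, inA k a -> inA2 k (dmap k a)) /\
    (forall a, inA2 k a -> dmap k a = 0).

Definition Mfam (i : 'I_n) : 'M[K]_n := \matrix_(k < n, j < n) cc i j k.

Definition n_quadratic (M : 'I_n -> 'M[K]_n) : Prop :=
  (forall i, (M i)^T = - M i) /\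
  (forall i k, M i k i = 0) /\
  (forall i j : 'I_n, (i < j)%N -> forall k, M i k j = - M j k i).

Definition non_null (M : 'I_n -> 'M[K]_n) : Prop := exists i, M i != 0.

(* quadratic algebra defined by the family: v_i = (b_i,0), z_i = (0,b_i^* ),
   [v_i,v_j] = sum_k m_ijk z_k with m_ijk = (M i) k j, extended bilinearly *)
Definition quad_br (M : 'I_n -> 'M[K]_n) (u v : Lsp) : Lsp :=
  (0, \sum_(i < n) \sum_(j < n) (u.1 0 i * v.1 0 j) *: \row_(k < n) M i k j).
Definition quad_form (u v : Lsp) : K :=
  \sum_(i < n) (u.1 0 i * v.2 0 i + u.2 0 i * v.1 0 i).

End Concrete.

(* Main.v *)
Require Import Defs.
From HB Require Import structures.
From mathcomp Require Import all_boot all_order all_algebra.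
From mathcomp Require Import zify ring.
Import GRing.Theory.
Local Open Scope ring_scope.
Set Implicit Arguments. Unset Strict Implicit.
Local Notation bv := (bvec _ _).
Local Notation coord := Defs.coord.
Local Notation proj := Defs.proj.

Lemma two_neq0 (K : fieldType) (hK : [pchar K] =i pred0) : (2%:R : K) != 0.
Proof.
apply/negP => /natf0_pchar [] // p hp.
by move: (hK p); rewrite hp.
Qed.

Lemma eq_opp0 (K : fieldType) (hK : [pchar K] =i pred0) (x : K) : x = - x -> x = 0.
Proof.
move=> h; have : x *+ 2 = 0 by rewrite mulr2n {1}h addNr.
by rewrite -mulr_natl => /eqP; rewrite mulf_eq0 (negbTE (two_neq0 hK)) => /eqP.
Qed.



Lemma w0l (K : fieldType) n (w : 'rV[K]_n -> 'rV[K]_n -> 'rV[K]_n) (hw : bilinear_op w) b : w 0 b = 0.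
Proof.
case: hw => h1 h2; have := h1 1 0 0 b; rewrite !scale1r !addr0 => /(congr1 (fun t => t - w 0 b)).
by rewrite subrr addrK => <-.
Qed.
Lemma w0r (K : fieldType) n (w : 'rV[K]_n -> 'rV[K]_n -> 'rV[K]_n) (hw : bilinear_op w) a : w a 0 = 0.
Proof.
case: hw => h1 h2; have := h2 1 a 0 0; rewrite !scale1r !addr0 => /(congr1 (fun t => t - w a 0)).
by rewrite subrr addrK => <-.
Qed.
Lemma wDl (K : fieldType) n (w : 'rV[K]_n -> 'rV[K]_n -> 'rV[K]_n) (hw : bilinear_op w) x y b :
  w (x + y) b = w x b + w y b.
Proof. by case: (hw) => h1 _; have := h1 1 x y b; rewrite !scale1r. Qed.
Lemma wZl (K : fieldType) n (w : 'rV[K]_n -> 'rV[K]_n -> 'rV[K]_n) (hw : bilinear_op w) c x b :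
  w (c *: x) b = c *: w x b.
Proof. by case: (hw) => h1 _; have := h1 c x 0 b; rewrite !addr0 (w0l hw) addr0. Qed.
Lemma wDr (K : fieldType) n (w : 'rV[K]_n -> 'rV[K]_n -> 'rV[K]_n) (hw : bilinear_op w) a x y :
  w a (x + y) = w a x + w a y.
Proof. by case: (hw) => _ h2; have := h2 1 a x y; rewrite !scale1r. Qed.
Lemma wZr (K : fieldType) n (w : 'rV[K]_n -> 'rV[K]_n -> 'rV[K]_n) (hw : bilinear_op w) c a x :
  w a (c *: x) = c *: w a x.
Proof. by case: (hw) => _ h2; have := h2 c a x 0; rewrite !addr0 (w0r hw) addr0. Qed.

Lemma bvec_ent (K : fieldType) n (l : nat) (t : 'I_n) : (bvec K n l) 0 t = (t == l :> nat)%:R.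
Proof. by rewrite mxE. Qed.

Lemma bvecE (K : fieldType) n (i : 'I_n) : bvec K n i = 'e_i.
Proof. by apply/rowP => j; rewrite !mxE eqxx. Qed.

Lemma bvec_out (K : fieldType) n i : (n <= i)%N -> bvec K n i = 0.
Proof.
move=> h; apply/rowP => j; rewrite !mxE.
have : (j : nat) != i by apply/eqP => e; move: (ltn_ord j); rewrite e; lia.
by move/negbTE ->.
Qed.

Lemma dpair_bvec (K : fieldType) n (x : 'rV[K]_n) (i : 'I_n) : dpair x (bv i) = x 0 i.
Proof.
rewrite /dpair (bigD1 i) //= bvec_ent eqxx mulr1 big1 ?addr0 // => j /negbTE hj.
by rewrite bvec_ent -[_ == _ :> nat]/(j == i) hj mulr0.
Qed.

Lemma coordE (K : fieldType) n (x : 'rV[K]_n) (i : 'I_n) : coord x i = x 0 i.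
Proof. exact: dpair_bvec. Qed.

Lemma coord_out (K : fieldType) n (x : 'rV[K]_n) i : (n <= i)%N -> coord x i = 0.
Proof. by move=> h; rewrite /coord bvec_out // /dpair big1 // => j _; rewrite mxE mulr0. Qed.

Lemma dpair0l (K : fieldType) n (y : 'rV[K]_n) : dpair 0 y = 0.
Proof. by rewrite /dpair big1 // => j _; rewrite mxE mul0r. Qed.
Lemma dpair0r (K : fieldType) n (y : 'rV[K]_n) : dpair y 0 = 0.
Proof. by rewrite /dpair big1 // => j _; rewrite mxE mulr0. Qed.
Lemma dpairC (K : fieldType) n (x y : 'rV[K]_n) : dpair x y = dpair y x.
Proof. by apply: eq_bigr => i _; rewrite mulrC. Qed.

Lemma ccE (K : fieldType) n (w : 'rV[K]_n -> 'rV[K]_n -> 'rV[K]_n) i j (k : 'I_n) :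
  cc w i j k = (w (bv i) (bv j)) 0 k.
Proof. exact: dpair_bvec. Qed.

Lemma cc_out (K : fieldType) n (w : 'rV[K]_n -> 'rV[K]_n -> 'rV[K]_n) (hw : bilinear_op w) i j k :
  ~~ [&& (i < n)%N, (j < n)%N & (k < n)%N] -> cc w i j k = 0.
Proof.
rewrite /cc; case: (ltnP i n) => hi /=; last by rewrite (bvec_out _ hi) (w0l hw) dpair0l.
case: (ltnP j n) => hj /=; last by rewrite (bvec_out _ hj) (w0r hw) dpair0l.
case: (ltnP k n) => hk //= _; by rewrite (bvec_out _ hk) dpair0r.
Qed.

Lemma w_suml (K : fieldType) n (w : 'rV[K]_n -> 'rV[K]_n -> 'rV[K]_n) (hw : bilinear_op w)
  (I : Type) (r : seq I) (P : pred I) (F : I -> 'rV[K]_n) b :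
  w (\sum_(i <- r | P i) F i) b = \sum_(i <- r | P i) w (F i) b.
Proof. exact: (big_morph (fun x => w x b) (fun x y => wDl hw x y b) (w0l hw b)). Qed.
Lemma w_sumr (K : fieldType) n (w : 'rV[K]_n -> 'rV[K]_n -> 'rV[K]_n) (hw : bilinear_op w)
  (I : Type) (r : seq I) (P : pred I) (F : I -> 'rV[K]_n) a :
  w a (\sum_(i <- r | P i) F i) = \sum_(i <- r | P i) w a (F i).
Proof. exact: (big_morph (fun x => w a x) (fun x y => wDr hw a x y) (w0r hw a)). Qed.

Lemma wE (K : fieldType) n (w : 'rV[K]_n -> 'rV[K]_n -> 'rV[K]_n) (hw : bilinear_op w) a b (m : 'I_n) :
  (w a b) 0 m = \sum_(i < n) \sum_(j < n) a 0 i * b 0 j * cc w i j m.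
Proof.
rewrite {1}(row_sum_delta a) w_suml // summxE; apply: eq_bigr => i _.
rewrite (wZl hw) {1}(row_sum_delta b) w_sumr // mxE summxE mulr_sumr; apply: eq_bigr => j _.
by rewrite (wZr hw) mxE ccE !bvecE mulrA.
Qed.

Lemma row_eq (K : fieldType) n (x y : 'rV[K]_n) : (forall m : 'I_n, x 0 m = y 0 m) -> x = y.
Proof. by move=> h; apply/rowP => m; rewrite h. Qed.

Lemma sum_split (K : fieldType) n k (hk : (k < n)%N) (F : 'I_n -> K) :
  \sum_(l < n | (l < k.+1)%N) F l = \sum_(l < n | (l < k)%N) F l + F (Ordinal hk).
Proof.
rewrite (bigD1 (Ordinal hk)) //= addrC; congr (_ + _); apply: eq_bigl => l.
by rewrite -val_eqE /= ltnS ltn_neqAle andbC.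
Qed.

Lemma sum_all (K : fieldType) n (F : 'I_n -> K) :
  \sum_(l < n | (l < n)%N) F l = \sum_(l < n) F l.
Proof. by apply: eq_bigl => l; rewrite ltn_ord. Qed.

Lemma sum_bvec (K : fieldType) n (l : 'I_n) (P : pred 'I_n) (F : 'I_n -> K) :
  P l -> \sum_(t < n | P t) (bvec K n l) 0 t * F t = F l.
Proof.
move=> hP; rewrite (bigD1 l) //= bvec_ent eqxx mul1r big1 ?addr0 // => j /andP[_ hj].
by rewrite bvec_ent -[_ == _ :> nat]/(j == l) (negbTE hj) mul0r.
Qed.

Lemma projE1 (K : fieldType) n k (u : Lsp K n) (l : 'I_n) :
  (proj k u).1 0 l = if (l < k)%N then u.1 0 l else 0.
Proof. by rewrite /proj /= mxE. Qed.
Lemma projE2 (K : fieldType) n k (u : Lsp K n) (l : 'I_n) :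
  (proj k u).2 0 l = if (l < k)%N then u.2 0 l else 0.
Proof. by rewrite /proj /= mxE. Qed.

Lemma dmap1 (K : fieldType) n w k (a : Lsp K n) : (dmap w k a).1 = 0.
Proof. by []. Qed.

Lemma dmapE (K : fieldType) n w k (a : Lsp K n) (m : 'I_n) :
  (dmap w k a).2 0 m = if (m < k)%N then \sum_(j < n | (j < k)%N) cc w k j m * a.1 0 j else 0.
Proof.
rewrite /dmap /= summxE.
transitivity (\sum_(j < n | (j < k)%N) ((\sum_(i < n | (i < k)%N) cc w k i j * a.1 0 i) * (m == j :> nat)%:R)).
  by apply: eq_bigr => j _; rewrite mxE bvec_ent.
case: ifP => hm.
  rewrite (bigD1 m) //= eqxx mulr1 [X in _ + X]big1 ?addr0 // => j /andP[_ hj].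
  by rewrite -[_ == _ :> nat]/(m == j) eq_sym (negbTE hj) mulr0.
rewrite big1 // => j hj.
have -> : (m == j :> nat) = false by apply/negbTE; apply/eqP => e; move: hm; rewrite e hj.
by rewrite mulr0.
Qed.

Lemma dformE (K : fieldType) n k (u v : Lsp K n) : (k <= n)%N ->
  dform k u v = \sum_(l < n | (l < k)%N) (u.1 0 l * v.2 0 l + v.1 0 l * u.2 0 l).
Proof.
elim: k u v => [|k IH] u v hk /=.
  by rewrite big_pred0 // => l; rewrite ltn0.
rewrite IH ?(ltnW hk) // sum_split addrC; congr (_ + _).
  by apply: eq_bigr => l hl; rewrite !projE1 !projE2 hl.
by rewrite !(coordE _ (Ordinal hk)).
Qed.

Definition Dc (K : fieldType) n (w : 'rV[K]_n -> 'rV[K]_n -> 'rV[K]_n) (p q m : nat) : K :=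
  (if (q < p)%N && (m < p)%N then cc w p q m else 0)
  - (if (p < q)%N && (m < q)%N then cc w q p m else 0)
  + (if (p < m)%N && (q < m)%N then cc w m p q else 0).

Lemma D1 (K : fieldType) n w (p q m : nat) : (q < p)%N -> (m < p)%N -> @Dc K n w p q m = cc w p q m.
Proof.
move=> h1 h2; rewrite /Dc h1 h2 /=.
have -> : (p < q)%N && (m < q)%N = false by lia.
have -> : (p < m)%N && (q < m)%N = false by lia.
by rewrite subr0 addr0.
Qed.
Lemma D2 (K : fieldType) n w (p q m : nat) : (p < q)%N -> (m < q)%N -> @Dc K n w p q m = - cc w q p m.
Proof.
move=> h1 h2; rewrite /Dc h1 h2 /=.
have -> : (q < p)%N && (m < p)%N = false by lia.
have -> : (p < m)%N && (q < m)%N = false by lia.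
by rewrite sub0r addr0.
Qed.
Lemma D3 (K : fieldType) n w (p q m : nat) : (p < m)%N -> (q < m)%N -> @Dc K n w p q m = cc w m p q.
Proof.
move=> h1 h2; rewrite /Dc h1 h2 /=.
have -> : (q < p)%N && (m < p)%N = false by lia.
have -> : (p < q)%N && (m < q)%N = false by lia.
by rewrite subr0 add0r.
Qed.
Lemma D0 (K : fieldType) n w (p q m : nat) :
  ~~ ((q < p)%N && (m < p)%N) -> ~~ ((p < q)%N && (m < q)%N) -> ~~ ((p < m)%N && (q < m)%N) ->
  @Dc K n w p q m = 0.
Proof. by rewrite /Dc => /negbTE-> /negbTE-> /negbTE->; rewrite subrr addr0. Qed.

Lemma sum_split2 (K : fieldType) n k (hk : (k < n)%N) (F : 'I_n -> 'I_n -> K) :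
  \sum_(p < n | (p < k.+1)%N) \sum_(q < n | (q < k.+1)%N) F p q =
  \sum_(p < n | (p < k)%N) \sum_(q < n | (q < k)%N) F p q + \sum_(p < n | (p < k)%N) F p (Ordinal hk)
  + \sum_(q < n | (q < k)%N) F (Ordinal hk) q + F (Ordinal hk) (Ordinal hk).
Proof.
rewrite sum_split.
transitivity (\sum_(p < n | (p < k)%N) (\sum_(q < n | (q < k)%N) F p q + F p (Ordinal hk))
   + (\sum_(q < n | (q < k)%N) F (Ordinal hk) q + F (Ordinal hk) (Ordinal hk))).
  by congr (_ + _); [apply: eq_bigr => p _|]; rewrite sum_split.
by rewrite big_split /= !addrA.
Qed.

Lemma dbr_unfold (K : fieldType) n w k (u v : Lsp K n) :
  dbr w k.+1 u v = coord u.1 k *: dmap w k (proj k v) - coord v.1 k *: dmap w k (proj k u)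
     + dbr w k (proj k u) (proj k v) + dform k (dmap w k (proj k u)) (proj k v) *: bsL K n k.
Proof. by []. Qed.

Lemma pair2D (K : fieldType) n (x y : Lsp K n) : (x + y).2 = x.2 + y.2. Proof. by []. Qed.
Lemma pair2N (K : fieldType) n (x : Lsp K n) : (- x).2 = - x.2. Proof. by []. Qed.
Lemma pair2Z (K : fieldType) n (c : K) (x : Lsp K n) : (c *: x).2 = c *: x.2. Proof. by []. Qed.
Lemma rowD (K : fieldType) n (x y : 'rV[K]_n) m : (x + y) 0 m = x 0 m + y 0 m. Proof. by rewrite mxE. Qed.
Lemma rowN (K : fieldType) n (x : 'rV[K]_n) m : (- x) 0 m = - x 0 m. Proof. by rewrite !mxE. Qed.
Lemma rowZ (K : fieldType) n (c : K) (x : 'rV[K]_n) m : (c *: x) 0 m = c * x 0 m. Proof. by rewrite mxE. Qed.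

Lemma dbrE (K : fieldType) n w k (u v : Lsp K n) : (k <= n)%N ->
  (dbr w k u v).1 = 0 /\ forall m : 'I_n, (dbr w k u v).2 0 m =
    if (m < k)%N then \sum_(p < n | (p < k)%N) \sum_(q < n | (q < k)%N) u.1 0 p * v.1 0 q * Dc w p q m
    else 0.
Proof.
elim: k u v => [|k IH] u v hk.
  by split => // m; rewrite ltn0 mxE.
have [IH1 IH2] := IH (proj k u) (proj k v) (ltnW hk).
rewrite dbr_unfold; split.
  by rewrite /= IH1 !scaler0 subrr !addr0.
move=> m.
rewrite !pair2D pair2N !pair2Z !rowD rowN !rowZ !dmapE IH2 (dformE _ _ (ltnW hk)) bvec_ent.
rewrite !(coordE _ (Ordinal hk)).
have E1 (x : Lsp K n) (m0 : 'I_n) : \sum_(j < n | (j < k)%N) cc w k j m0 * (proj k x).1 0 j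
    = \sum_(j < n | (j < k)%N) cc w k j m0 * x.1 0 j.
  by apply: eq_bigr => j hj; rewrite projE1 hj.
rewrite !E1.
have E2 : \sum_(p < n | (p < k)%N) \sum_(q < n | (q < k)%N)
     (proj k u).1 0 p * (proj k v).1 0 q * Dc w p q m =
   \sum_(p < n | (p < k)%N) \sum_(q < n | (q < k)%N) u.1 0 p * v.1 0 q * Dc w p q m.
  by apply: eq_bigr => p hp; apply: eq_bigr => q hq; rewrite !projE1 hp hq.
rewrite E2.
have E3 : \sum_(l < n | (l < k)%N) ((dmap w k (proj k u)).1 0 l * (proj k v).2 0 l +
       (proj k v).1 0 l * (dmap w k (proj k u)).2 0 l) =
    \sum_(l < n | (l < k)%N) v.1 0 l * \sum_(j < n | (j < k)%N) cc w k j l * u.1 0 j.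
  by apply: eq_bigr => l hl; rewrite dmap1 mxE mul0r add0r projE1 hl dmapE hl E1.
rewrite E3 sum_split2.
set ko := Ordinal hk.
case: (ltngtP m k) => hm.
- rewrite ltnS (ltnW hm) mulr0.
  have A : \sum_(q < n | (q < k)%N) u.1 0 ko * v.1 0 q * Dc w ko q m =
      u.1 0 ko * \sum_(j < n | (j < k)%N) cc w k j m * v.1 0 j.
    by rewrite mulr_sumr; apply: eq_bigr => q hq; rewrite D1 //; ring.
  have B : \sum_(p < n | (p < k)%N) u.1 0 p * v.1 0 ko * Dc w p ko m =
      - (v.1 0 ko * \sum_(j < n | (j < k)%N) cc w k j m * u.1 0 j).
    by rewrite mulr_sumr -sumrN; apply: eq_bigr => p hp; rewrite D2 //; ring.
  have C : Dc w ko ko m = 0 by apply: D0 => /=; lia.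
  rewrite A B C; ring.
- have -> : (m < k.+1)%N = false by lia.
  by rewrite !mulr0 subr0 !addr0.
- rewrite hm ltnSn mulr1.
  have A : \sum_(p < n | (p < k)%N) \sum_(q < n | (q < k)%N) u.1 0 p * v.1 0 q * Dc w p q k =
      \sum_(l < n | (l < k)%N) v.1 0 l * \sum_(j < n | (j < k)%N) cc w k j l * u.1 0 j.
    rewrite exchange_big /=; apply: eq_bigr => q hq; rewrite mulr_sumr; apply: eq_bigr => p hp.
    by rewrite D3 //; ring.
  have B : \sum_(p < n | (p < k)%N) u.1 0 p * v.1 0 ko * Dc w p ko k = 0.
    by apply: big1 => p hp; rewrite D0 ?mulr0 //= ; lia.
  have C : \sum_(q < n | (q < k)%N) u.1 0 ko * v.1 0 q * Dc w ko q k = 0.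
    by apply: big1 => q hq; rewrite D0 ?mulr0 //= ; lia.
  have D : Dc w ko ko k = 0 by apply: D0 => /=; lia.
  rewrite A B C D; ring.
Qed.

Definition ALT (K : fieldType) n (w : 'rV[K]_n -> 'rV[K]_n -> 'rV[K]_n) :=
  forall i j k : nat, cc w i j k = - cc w j i k /\ cc w i j k = - cc w i k j.
Definition NZ (K : fieldType) n (w : 'rV[K]_n -> 'rV[K]_n -> 'rV[K]_n) :=
  exists i j k : 'I_n, cc w i j k != 0.

Lemma ALT_lt (K : fieldType) n (w : 'rV[K]_n -> 'rV[K]_n -> 'rV[K]_n) (hw : bilinear_op w) :
  (forall i j k : 'I_n, cc w i j k = - cc w j i k /\ cc w i j k = - cc w i k j) -> ALT w.
Proof.
move=> h i j k; case: (boolP [&& (i < n)%N, (j < n)%N & (k < n)%N]) => [/and3P[hi hj hk] | hout].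
  exact: (h (Ordinal hi) (Ordinal hj) (Ordinal hk)).
by split; rewrite !(cc_out hw) ?oppr0 //; lia.
Qed.

Lemma tie1 (K : fieldType) n (w : 'rV[K]_n -> 'rV[K]_n -> 'rV[K]_n) (hK : [pchar K] =i pred0) :
  ALT w -> forall i k, cc w i i k = 0.
Proof. by move=> h i k; apply: (eq_opp0 hK); case: (h i i k). Qed.
Lemma tie2 (K : fieldType) n (w : 'rV[K]_n -> 'rV[K]_n -> 'rV[K]_n) (hK : [pchar K] =i pred0) :
  ALT w -> forall i j, cc w i j j = 0.
Proof. by move=> h i j; apply: (eq_opp0 hK); case: (h i j j). Qed.
Lemma tie3 (K : fieldType) n (w : 'rV[K]_n -> 'rV[K]_n -> 'rV[K]_n) (hK : [pchar K] =i pred0) :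
  ALT w -> forall i j, cc w i j i = 0.
Proof. by move=> h i j; case: (h i j i) => _ ->; rewrite (tie1 hK h) oppr0. Qed.
Lemma cyc1 (K : fieldType) n (w : 'rV[K]_n -> 'rV[K]_n -> 'rV[K]_n) :
  ALT w -> forall i j k, cc w i j k = cc w k i j.
Proof. by move=> h i j k; case: (h i j k) => _ ->; case: (h i k j) => -> _; rewrite opprK. Qed.

Lemma pairE (K : fieldType) n (x y : Lsp K n) : x.1 = y.1 -> x.2 = y.2 -> x = y.
Proof. by case: x => ? ?; case: y => ? ? /= -> ->. Qed.

Lemma NZ_iff (K : fieldType) n (w : 'rV[K]_n -> 'rV[K]_n -> 'rV[K]_n) (hw : bilinear_op w) :
  NZ w <-> exists a b, w a b != 0.
Proof.
split.
  move=> [i [j [k h]]]; exists (bv i), (bv j); apply/negP => /eqP e.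
  by move: h; rewrite /cc e dpair0l eqxx.
move=> [a [b h]].
case: (pickP (fun t : 'I_n * 'I_n * 'I_n => cc w t.1.1 t.1.2 t.2 != 0)) => [[[i j] k] /= hc | hn].
  by exists i, j, k.
case/negP: h; apply/eqP; apply/rowP => m; rewrite wE // mxE big1 // => i _.
apply: big1 => j _; have := hn (i, j, m); rewrite /= => /negbFE/eqP ->; by rewrite mulr0.
Qed.

Lemma dpairNl (K : fieldType) n (x y : 'rV[K]_n) : dpair (- x) y = - dpair x y.
Proof. by rewrite /dpair -sumrN; apply: eq_bigr => i _; rewrite mxE mulNr. Qed.

Lemma tri_expand (K : fieldType) n (w : 'rV[K]_n -> 'rV[K]_n -> 'rV[K]_n) (hw : bilinear_op w) a b c :
  dpair (w a b) c = \sum_(i < n) \sum_(j < n) \sum_(m < n) a 0 i * b 0 j * c 0 m * cc w i j m.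
Proof.
transitivity (\sum_(m < n) \sum_(i < n) \sum_(j < n) a 0 i * b 0 j * c 0 m * cc w i j m).
  apply: eq_bigr => m _; rewrite wE // mulr_suml; apply: eq_bigr => i _.
  by rewrite mulr_suml; apply: eq_bigr => j _; ring.
rewrite exchange_big; apply: eq_bigr => i _; by rewrite exchange_big.
Qed.

Lemma tri (K : fieldType) n (w : 'rV[K]_n -> 'rV[K]_n -> 'rV[K]_n) (hw : bilinear_op w) :
  (forall i j m : nat, cc w i j m = - cc w i m j) ->
  forall a b c, dpair (w a b) c = - dpair (w a c) b.
Proof.
move=> h a b c; rewrite !tri_expand // -sumrN; apply: eq_bigr => i _.
rewrite -sumrN exchange_big; apply: eq_bigr => j _; rewrite -sumrN; apply: eq_bigr => m _.
by rewrite h; ring.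
Qed.

Lemma w_anti (K : fieldType) n (w : 'rV[K]_n -> 'rV[K]_n -> 'rV[K]_n) (hw : bilinear_op w) :
  (forall i j m : nat, cc w i j m = - cc w j i m) -> forall a b, w a b = - w b a.
Proof.
move=> h a b; apply/rowP => m; rewrite mxE !wE // [in RHS]exchange_big -sumrN.
apply: eq_bigr => i _; rewrite -sumrN; apply: eq_bigr => j _; by rewrite h; ring.
Qed.

Lemma w_alt (K : fieldType) n (w : 'rV[K]_n -> 'rV[K]_n -> 'rV[K]_n) (hw : bilinear_op w)
  (hK : [pchar K] =i pred0) : ALT w -> forall a, w a a = 0.
Proof.
move=> h a; apply/rowP => m; rewrite mxE; apply: (eq_opp0 hK).
have e := w_anti hw (fun i j m => proj1 (h i j m)) a a.
have := congr1 (fun x : 'rV[K]_n => x 0 m) e.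
by rewrite /= mxE.
Qed.

Lemma cyc_dpair (K : fieldType) n (w : 'rV[K]_n -> 'rV[K]_n -> 'rV[K]_n) (hw : bilinear_op w) :
  ALT w -> forall a b c, dpair (w a b) c = dpair (w c a) b.
Proof.
move=> h a b c; rewrite (tri hw (fun i j m => proj2 (h i j m))).
by rewrite (w_anti hw (fun i j m => proj1 (h i j m)) a c) dpairNl opprK.
Qed.

Lemma dpairDl (K : fieldType) n (x y z : 'rV[K]_n) : dpair (x + y) z = dpair x z + dpair y z.
Proof. by rewrite /dpair -big_split; apply: eq_bigr => i _; rewrite mxE mulrDl. Qed.
Lemma dpairZl (K : fieldType) n (c : K) (x z : 'rV[K]_n) : dpair (c *: x) z = c * dpair x z.
Proof. by rewrite /dpair mulr_sumr; apply: eq_bigr => i _; rewrite mxE mulrA. Qed.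
Lemma dpairDr (K : fieldType) n (x y z : 'rV[K]_n) : dpair z (x + y) = dpair z x + dpair z y.
Proof. by rewrite dpairC dpairDl !(dpairC z). Qed.
Lemma dpairZr (K : fieldType) n (c : K) (x z : 'rV[K]_n) : dpair z (c *: x) = c * dpair z x.
Proof. by rewrite dpairC dpairZl dpairC. Qed.

Definition Pa (K : fieldType) n (w : 'rV[K]_n -> 'rV[K]_n -> 'rV[K]_n) :=
  is_quadratic_lie (Lbr w) (@Lform K n) /\ two_step_nilpotent (Lbr w).

Lemma a_hub (K : fieldType) n (w : 'rV[K]_n -> 'rV[K]_n -> 'rV[K]_n) (hw : bilinear_op w)
  (hK : [pchar K] =i pred0) : Pa w <-> ALT w /\ NZ w.
Proof.
split.
  move=> [[[_ [hxx _]] [_ [_ [_ hinv]]]] [_ [x [y hxy]]]].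
  have hwaa a : w a a = 0 := congr1 snd (hxx (a, 0)).
  have anti a b : w a b = - w b a.
    by have := hwaa (a + b); rewrite (wDl hw) !(wDr hw) !hwaa add0r addr0 => /eqP; rewrite addr_eq0 => /eqP.
  split.
    move=> i j k; split; first by rewrite /cc anti dpairNl.
    have := hinv (bv i, 0) (bv j, 0) (bv k, 0).
    rewrite /Lform /Lbr /= !dpair0l addr0 add0r => /eqP; rewrite addr_eq0 => /eqP.
    by [].
  apply/(NZ_iff hw); exists x.1, y.1; apply/negP => /eqP e; move: hxy; rewrite /Lbr e.
  by rewrite eqxx.
move=> [h hnz]; split.
  split.
    split.
      split => a x y z; apply: pairE => /=; first by rewrite scaler0 addr0.
        by case: hw => h1 _; rewrite h1.
      by rewrite scaler0 addr0.
      by case: hw => _ h2; rewrite h2.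
    split; first by move=> x; apply: pairE => //=; exact: (w_alt hw hK h).
    by move=> x y z; apply: pairE => /=; rewrite ?(w0r hw) !addr0.
  split.
    split => a x y z; rewrite /Lform /= !dpairDl !dpairDr !dpairZl !dpairZr; ring.
  split; first by move=> x y; rewrite /Lform addrC.
  split.
    move=> x hx; apply: pairE; apply/rowP => m; rewrite mxE.
      by have := hx (0, bv m); rewrite /Lform /= dpair0r add0r dpairC dpair_bvec.
    by have := hx (bv m, 0); rewrite /Lform /= dpair0l addr0 dpair_bvec.
  move=> x y z; rewrite /Lform /Lbr /= !dpair0r addr0 add0r.
  by rewrite (tri hw (fun i j m => proj2 (h i j m))) addNr.
split; first by move=> x y z; apply: pairE => //=; rewrite (w0r hw).
have [a [b hab]] := (NZ_iff hw).1 hnz.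
exists (a, 0), (b, 0); apply/negP => /eqP/(congr1 snd) /= e.
by rewrite e eqxx in hab.
Qed.

Definition Pb (K : fieldType) n (w : 'rV[K]_n -> 'rV[K]_n -> 'rV[K]_n) :=
  cocycle_abelian w /\ cyclic_w w /\ (exists a b, w a b != 0) /\
     (forall u v, Lbr w u v = tstar_br w u v /\ Lform u v = tstar_form u v).

Lemma b_hub (K : fieldType) n (w : 'rV[K]_n -> 'rV[K]_n -> 'rV[K]_n) (hw : bilinear_op w)
  (hK : [pchar K] =i pred0) : Pb w <-> ALT w /\ NZ w.
Proof.
split.
  move=> [[_ anti] [cyc [nz _]]]; split; last exact/(NZ_iff hw).
  move=> i j k; split; first by rewrite /cc anti dpairNl.
  have c1 := proj1 (cyc (bv i) (bv k) (bv j)).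
  by rewrite /cc c1 [w (bv j) (bv i)]anti dpairNl opprK.
move=> [h hnz]; split; first by split => //; exact: (w_anti hw (fun i j m => proj1 (h i j m))).
split; first by move=> a b c; split; exact: (cyc_dpair hw h).
split; first exact/(NZ_iff hw).
by [].
Qed.

Definition Pd (K : fieldType) n (w : 'rV[K]_n -> 'rV[K]_n -> 'rV[K]_n) :=
  n_quadratic (Mfam w) /\ non_null (Mfam w) /\
     (forall u v, quad_br (Mfam w) u v = Lbr w u v /\ quad_form u v = Lform u v).

Lemma quad_ok (K : fieldType) n (w : 'rV[K]_n -> 'rV[K]_n -> 'rV[K]_n) (hw : bilinear_op w) u v :
  quad_br (Mfam w) u v = Lbr w u v /\ quad_form u v = Lform u v.
Proof.
split.
  apply: pairE => //=; apply/rowP => m; rewrite wE // summxE; apply: eq_bigr => i _.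
  by rewrite summxE; apply: eq_bigr => j _; rewrite !mxE.
by rewrite /quad_form /Lform /dpair -big_split; apply: eq_bigr => i _ /=; ring.
Qed.

Lemma d_hub (K : fieldType) n (w : 'rV[K]_n -> 'rV[K]_n -> 'rV[K]_n) (hw : bilinear_op w)
  (hK : [pchar K] =i pred0) : Pd w <-> ALT w /\ NZ w.
Proof.
split.
  move=> [[hT [hd hij]] [[i hi] _]]; split.
    apply: (ALT_lt hw) => p q m; split.
      case: (ltngtP p q) => h.
      - by have := hij p q h m; rewrite !mxE.
      - by have := hij q p h m; rewrite !mxE => ->; rewrite opprK.
      - have e : p = q := val_inj h; subst q.
        by have := hd p m; rewrite mxE => ->; rewrite oppr0.
    by have := congr1 (fun M : 'M[K]_n => M m q) (hT p); rewrite !mxE => ->; rewrite opprK.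
  case: (pickP (fun t : 'I_n * 'I_n => Mfam w i t.1 t.2 != 0)) => [[k j] /= hc | hn].
    by exists i, j, k; move: hc; rewrite mxE.
  case/negP: hi; apply/eqP/matrixP => k j; rewrite [LHS]mxE [RHS]mxE.
  by have := hn (k, j); rewrite /= mxE => /negbFE/eqP ->.
move=> [h hnz]; split.
  split; first by move=> i; apply/matrixP => k j; rewrite !mxE; exact: (proj2 (h i k j)).
  split; first by move=> i k; rewrite mxE (tie1 hK h).
  by move=> i j _ k; rewrite !mxE; exact: (proj1 (h i j k)).
split; last exact: quad_ok.
move: hnz => [i [j [k hc]]]; exists i; apply/negP => /eqP e.
have := congr1 (fun M : 'M[K]_n => M k j) e; rewrite !mxE => e'.
by rewrite e' eqxx in hc.
Qed.

Lemma dmap_inA (K : fieldType) n w k (a : Lsp K n) : inA k (dmap w k a).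
Proof.
rewrite /inA; apply: pairE; apply/rowP => m.
  by rewrite projE1 dmap1 mxE; case: ifP.
by rewrite projE2 [RHS]dmapE; case: ifP => hm //; rewrite dmapE hm.
Qed.

Lemma dmap_0 (K : fieldType) n w k (a : Lsp K n) : a.1 = 0 -> dmap w k a = 0.
Proof.
move=> h; apply: pairE => //; apply/rowP => m; rewrite dmapE [RHS]mxE; case: ifP => // _.
by apply: big1 => j _; rewrite h mxE mulr0.
Qed.

Lemma dbr_0l (K : fieldType) n w k (u v : Lsp K n) : (k <= n)%N -> u.1 = 0 -> dbr w k u v = 0.
Proof.
move=> hk h; have [h1 h2] := dbrE w u v hk; apply: pairE => //; apply/rowP => m.
rewrite h2 [RHS]mxE; case: ifP => // _; apply: big1 => p _; apply: big1 => q _.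
by rewrite h mxE !mul0r.
Qed.
Lemma dbr_0r (K : fieldType) n w k (u v : Lsp K n) : (k <= n)%N -> v.1 = 0 -> dbr w k u v = 0.
Proof.
move=> hk h; have [h1 h2] := dbrE w u v hk; apply: pairE => //; apply/rowP => m.
rewrite h2 [RHS]mxE; case: ifP => // _; apply: big1 => p _; apply: big1 => q _.
by rewrite h mxE mulr0 mul0r.
Qed.

Lemma twosp (K : fieldType) n (w : 'rV[K]_n -> 'rV[K]_n -> 'rV[K]_n) : TwoSP w.
Proof.
move=> k hk; split; first by move=> a _; split => //; exact: dmap_inA.
by move=> a [h1 _]; exact: dmap_0.
Qed.

Lemma dform_n (K : fieldType) n (u v : Lsp K n) : dform n u v = Lform u v.
Proof.
rewrite dformE // sum_all /Lform /dpair -big_split; apply: eq_bigr => i _ /=; ring.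
Qed.

Lemma Dfull (K : fieldType) n (w : 'rV[K]_n -> 'rV[K]_n -> 'rV[K]_n) (hK : [pchar K] =i pred0) :
  ALT w -> forall p q m : nat, Dc w p q m = cc w p q m.
Proof.
move=> h p q m.
case: (boolP ((q < p)%N && (m < p)%N)) => [/andP[h1 h2] | n1]; first exact: D1.
case: (boolP ((p < q)%N && (m < q)%N)) => [/andP[h1 h2] | n2].
  by rewrite D2 // (proj1 (h p q m)).
case: (boolP ((p < m)%N && (q < m)%N)) => [/andP[h1 h2] | n3].
  by rewrite D3 // (cyc1 h p q m).
rewrite D0 //.
have : [|| p == q, q == m | p == m] by lia.
case/or3P => /eqP e; subst.
- by rewrite (tie1 hK h).
- by rewrite (tie2 hK h).
- by rewrite (tie3 hK h).
Qed.

Lemma dbr_n (K : fieldType) n (w : 'rV[K]_n -> 'rV[K]_n -> 'rV[K]_n) (hw : bilinear_op w)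
  (hK : [pchar K] =i pred0) : ALT w -> forall u v, dbr w n u v = Lbr w u v.
Proof.
move=> h u v; have [h1 h2] := dbrE w u v (leqnn n); apply: pairE => //; apply/rowP => m.
rewrite h2 ltn_ord sum_all /Lbr /= wE //; apply: eq_bigr => p _.
by rewrite sum_all; apply: eq_bigr => q _; rewrite (Dfull hK h).
Qed.

Lemma Galt (K : fieldType) n (w : 'rV[K]_n -> 'rV[K]_n -> 'rV[K]_n) :
  (forall k j l : nat, (k < n)%N -> (j < k)%N -> (l < k)%N -> cc w k j l = - cc w k l j) ->
  forall p q m : nat, (p < n)%N -> (q < n)%N -> (m < n)%N ->
  Dc w p q m = - Dc w q p m /\ Dc w p q m = - Dc w p m q.
Proof.
move=> S p q m hp hq hm.
case: (boolP ((q < p)%N && (m < p)%N)) => [/andP[h1 h2] | n1].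
  by rewrite D1 // D2 // D1 // (S p q m) // opprK.
case: (boolP ((p < q)%N && (m < q)%N)) => [/andP[h1 h2] | n2].
  by rewrite D2 // D1 // D3 // opprK.
case: (boolP ((p < m)%N && (q < m)%N)) => [/andP[h1 h2] | n3].
  by rewrite D3 // D3 // D2 // (S m q p) // opprK.
rewrite !D0 ?oppr0 //; lia.
Qed.

Lemma inA_bL (K : fieldType) n k (j : 'I_n) : (j < k)%N -> inA k (bL K n j).
Proof.
move=> hj; rewrite /inA; apply: pairE; apply/rowP => t; rewrite ?projE1 ?projE2 /=.
  case: ifP => // ht; rewrite bvec_ent; case: eqP => // e; lia.
by case: ifP => //; rewrite mxE.
Qed.

Lemma dmap_bL (K : fieldType) n w k (j m : 'I_n) : (j < k)%N -> (m < k)%N ->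
  (dmap w k (bL K n j)).2 0 m = cc w k j m.
Proof.
move=> hj hm; rewrite dmapE hm (bigD1 j) //= bvec_ent eqxx mulr1 [X in _ + X]big1 ?addr0 //.
move=> i /andP[_ hi]; by rewrite bvec_ent -[_ == _ :> nat]/(i == j) (negbTE hi) mulr0.
Qed.

Lemma nnp_of (K : fieldType) n (w : 'rV[K]_n -> 'rV[K]_n -> 'rV[K]_n) (p q r : 'I_n) :
  (q < p)%N -> (r < p)%N -> cc w p q r != 0 -> NNP w.
Proof.
move=> hq hr hc; exists p; split => //; exists (bL K n q); split; first exact: inA_bL.
apply/negP => /eqP e; have := congr1 (fun x : Lsp K n => x.2 0 r) e.
by rewrite /= dmap_bL // mxE => e'; rewrite e' eqxx in hc.
Qed.

Lemma pair1D (K : fieldType) n (x y : Lsp K n) : (x + y).1 = x.1 + y.1. Proof. by []. Qed.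
Lemma pair1Z (K : fieldType) n (c : K) (x : Lsp K n) : (c *: x).1 = c *: x.1. Proof. by []. Qed.

Lemma skew_sum (K : fieldType) n w k (a b : Lsp K n) : (k < n)%N ->
  dform k (dmap w k a) b + dform k a (dmap w k b) =
  \sum_(l < n | (l < k)%N) \sum_(j < n | (j < k)%N)
     (b.1 0 l * a.1 0 j * cc w k j l + a.1 0 l * b.1 0 j * cc w k j l).
Proof.
move=> hk; rewrite !(dformE _ _ (ltnW hk)) -big_split; apply: eq_bigr => l hl.
rewrite !dmap1 !mxE !dmapE hl !mul0r !add0r addr0 big_split /= !mulr_sumr; congr (_ + _);
  by apply: eq_bigr => j _; ring.
Qed.


Lemma chain (K : fieldType) n (w : 'rV[K]_n -> 'rV[K]_n -> 'rV[K]_n) :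
  ALT w -> is_chain w.
Proof.
move=> h k hk; split; [|split; [|split]].
- move=> al a b _ _; apply: pairE; first by rewrite pair1D pair1Z !dmap1 scaler0 addr0.
  apply/rowP => m; rewrite pair2D pair2Z rowD rowZ !dmapE.
  case: ifP => _; last by rewrite mulr0 addr0.
  rewrite mulr_sumr -big_split; apply: eq_bigr => j _.
  by rewrite pair1D pair1Z rowD rowZ mulrDr mulrCA.
- by move=> a _; exact: dmap_inA.
- move=> a b _ _; rewrite dmap_0; last by have [] := dbrE w a b (ltnW hk).
  by rewrite dbr_0l ?dbr_0r ?addr0 // ltnW.
- move=> a b _ _; rewrite skew_sum //.
  transitivity (\sum_(l < n | (l < k)%N) \sum_(j < n | (j < k)%N) (b.1 0 l * a.1 0 j * cc w k j l)
     + \sum_(l < n | (l < k)%N) \sum_(j < n | (j < k)%N) (a.1 0 l * b.1 0 j * cc w k j l)).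
    by rewrite -big_split; apply: eq_bigr => l _; rewrite -big_split.
  rewrite [X in _ + X]exchange_big -big_split big1 // => l _.
  rewrite -big_split big1 // => j _ /=.
  by rewrite (proj2 (h k j l)); ring.
Qed.

Lemma dsum (K : fieldType) n (j l : 'I_n) (P : pred 'I_n) (F : 'I_n -> 'I_n -> K) :
  P j -> P l ->
  \sum_(t < n | P t) \sum_(s < n | P s) (bvec K n l) 0 t * (bvec K n j) 0 s * F s t = F j l.
Proof.
move=> hj hl.
transitivity (\sum_(t < n | P t) (bvec K n l) 0 t * \sum_(s < n | P s) (bvec K n j) 0 s * F s t).
  by apply: eq_bigr => t _; rewrite mulr_sumr; apply: eq_bigr => s _; rewrite mulrA.
transitivity (\sum_(t < n | P t) (bvec K n l) 0 t * F j t).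
  by apply: eq_bigr => t _; rewrite sum_bvec.
by rewrite sum_bvec.
Qed.

Lemma dsum2 (K : fieldType) n (j l : 'I_n) (P : pred 'I_n) (F : 'I_n -> 'I_n -> K) :
  P j -> P l ->
  \sum_(t < n | P t) \sum_(s < n | P s) ((bvec K n l) 0 t * (bvec K n j) 0 s * F s t
      + (bvec K n j) 0 t * (bvec K n l) 0 s * F s t) = F j l + F l j.
Proof.
move=> hj hl.
transitivity (\sum_(t < n | P t) \sum_(s < n | P s) (bvec K n l) 0 t * (bvec K n j) 0 s * F s t
  + \sum_(t < n | P t) \sum_(s < n | P s) (bvec K n j) 0 t * (bvec K n l) 0 s * F s t).
  by rewrite -big_split; apply: eq_bigr => t _; rewrite -big_split.
by rewrite !dsum.
Qed.

Definition Pc (K : fieldType) n (w : 'rV[K]_n -> 'rV[K]_n -> 'rV[K]_n) :=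
  is_chain w /\ NNP w /\ TwoSP w /\
     (forall u v, dbr w n u v = Lbr w u v /\ dform n u v = Lform u v).

Lemma c_hub (K : fieldType) n (w : 'rV[K]_n -> 'rV[K]_n -> 'rV[K]_n) (hw : bilinear_op w)
  (hK : [pchar K] =i pred0) : Pc w <-> ALT w /\ NZ w.
Proof.
split.
  move=> [hch [hnnp [_ hbr]]].
  have S (k j l : nat) : (k < n)%N -> (j < k)%N -> (l < k)%N -> cc w k j l = - cc w k l j.
    move=> hk hj hl; have hjn : (j < n)%N by lia. have hln : (l < n)%N by lia.
    have := (hch k hk).2.2.2 (bL K n (Ordinal hjn)) (bL K n (Ordinal hln))
      (@inA_bL K n k (Ordinal hjn) hj) (@inA_bL K n k (Ordinal hln) hl).
    rewrite skew_sum // (@dsum2 K n (Ordinal hjn) (Ordinal hln) (fun t : 'I_n => (t < k)%N) (fun s t : 'I_n => cc w k s t)) //.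
    by move/eqP; rewrite addr_eq0 => /eqP.
  have E (p q m : 'I_n) : Dc w p q m = cc w p q m.
    have := congr1 (fun x : Lsp K n => x.2 0 m) (proj1 (hbr (bL K n p) (bL K n q))).
    rewrite (proj2 (dbrE w _ _ (leqnn n))) ltn_ord.
    rewrite (@dsum K n q p (fun t : 'I_n => (t < n)%N) (fun s t : 'I_n => Dc w t s m)) //= => ->.
    by rewrite ccE.
  split.
    apply: (ALT_lt hw) => p q m; rewrite -!E; exact: Galt.
  move: hnnp => [k [hk [a [ha hd]]]].
  case: (pickP (fun t : 'I_n * 'I_n * 'I_n => cc w t.1.1 t.1.2 t.2 != 0)) => [[[i j] m] /= hc | hn].
    by exists i, j, m.
  case/negP: hd; apply/eqP; apply: pairE => //; apply/rowP => m; rewrite dmapE [RHS]mxE.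
  case: ifP => // _; apply: big1 => j _.
  by have := hn (Ordinal hk, j, m); rewrite /= => /negbFE/eqP ->; rewrite mul0r.
move=> [h hnz]; split; first exact: chain.
split; last first.
  split; first exact: twosp.
  by move=> u v; split; [exact: dbr_n | exact: dform_n].
move: hnz => [i [j [m hc]]].
case: (boolP ((j < i)%N && (m < i)%N)) => [/andP[h1 h2] | n1]; first exact: (nnp_of h1 h2 hc).
case: (boolP ((i < j)%N && (m < j)%N)) => [/andP[h1 h2] | n2].
  by apply: (nnp_of (p := j) (q := i) (r := m)) => //; rewrite (proj1 (h j i m)) oppr_eq0.
case: (boolP ((i < m)%N && (j < m)%N)) => [/andP[h1 h2] | n3].
  by apply: (nnp_of (p := m) (q := i) (r := j)) => //; rewrite -(cyc1 h i j m).
have : [|| i == j :> nat, j == m :> nat | i == m :> nat] by lia.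
case/or3P => /eqP/val_inj e; subst.
- by rewrite (tie1 hK h) eqxx in hc.
- by rewrite (tie2 hK h) eqxx in hc.
- by rewrite (tie3 hK h) eqxx in hc.
Qed.

Unset Implicit Arguments. Set Strict Implicit.

Theorem theorem3p1 (K : fieldType) (n : nat)
  (hK : [pchar K] =i pred0) (hn : (3 <= n)%N)
  (w : 'rV[K]_n -> 'rV[K]_n -> 'rV[K]_n) (hw : bilinear_op w) :
  [<->
    (* (a) *)
    is_quadratic_lie (Lbr w) (@Lform K n) /\ two_step_nilpotent (Lbr w);
    (* (b) *)
    (cocycle_abelian w /\ cyclic_w w /\ (exists a b, w a b != 0) /\
     (forall u v, Lbr w u v = tstar_br w u v /\ Lform u v = tstar_form u v));
    (* (c) *)
    (is_chain w /\ NNP w /\ TwoSP w /\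
     (forall u v, dbr w n u v = Lbr w u v /\ dform n u v = Lform u v));
    (* (d) *)
    (n_quadratic (Mfam w) /\ non_null (Mfam w) /\
     (forall u v, quad_br (Mfam w) u v = Lbr w u v /\ quad_form u v = Lform u v))].
Proof.
have Ea := a_hub hw hK; have Eb := b_hub hw hK; have Ec := c_hub hw hK; have Ed := d_hub hw hK.
tfae => H.
- exact: Eb.2 (Ea.1 H).
- exact: Ec.2 (Eb.1 H).
- exact: Ed.2 (Ec.1 H).
- exact: Ea.2 (Ed.1 H).
Qed.
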